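(* Let $(X,d)$ be a compact metric space and let $f_1,f_2:X\to X$ be continuous. Suppose there is $c\in X$ with $f_1(x)=c$ for all $x\in X$, $f_2(c)=c$, and $f_2$ is accessible. Then the multiple mapping $F=\{f_1,f_2\}$ is (Hausdorff metric) accessible.
   Context: For the multiple mapping $F=\{f_1,f_2\}$ and $n\ge 1$, $F^n(x)=\{f_{i_1}f_{i_2}\cdots f_{i_n}(x)\mid i_1,\dots,i_n\in\{1,2\}\}$. The Hausdorff metric on nonempty compact subsets is $d_H(A,B)=\max\{\sup_{a\in A}\inf_{b\in B}d(a,b),\sup_{b\in B}\inf_{a\in A}d(a,b)\}$. $F$ is (Hausdorff metric) accessible if for every $\epsilon>0$ and all nonempty open $U,V\subset X$ there exist $x\in U$, $y\in V$ and $n\in\mathbb{Z}^+$ with $d_H(F^n(x),F^n(y))<\epsilon$. A continuous $f:X\to X$ is accessible if for every $\epsilon>0$ and all nonempty open $U,V\subset X$ there exist $x\in U$, $y\in V$ and $n\in\mathbb{Z}^+$ with $d(f^n(x),f^n(y))<\epsilon$. Here $\mathbb{Z}^+=\{1,2,\dots\}$. *)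

(* Defs.v *)
From Stdlib Require Import Reals List.
Import ListNotations.
Open Scope R_scope.

Record is_metric {X : Type} (d : X -> X -> R) : Prop := {
  metric_nonneg : forall x y, 0 <= d x y;
  metric_eq0 : forall x y, d x y = 0 <-> x = y;
  metric_sym : forall x y, d x y = d y x;
  metric_tri : forall x y z, d x z <= d x y + d y z
}.

Definition d_open {X : Type} (d : X -> X -> R) (U : X -> Prop) : Prop :=
  forall x, U x -> exists r, 0 < r /\ forall y, d x y < r -> U y.

Definition d_compact {X : Type} (d : X -> X -> R) : Prop :=
  forall (I : Type) (U : I -> X -> Prop),
    (forall i, d_open d (U i)) ->
    (forall x, exists i, U i x) ->
    exists l : list I, forall x, exists i, In i l /\ U i x.

Definition d_continuous {X : Type} (d : X -> X -> R) (f : X -> X) : Prop :=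
  forall x eps, 0 < eps -> exists delta, 0 < delta /\
    forall y, d x y < delta -> d (f x) (f y) < eps.

Definition accessible {X : Type} (d : X -> X -> R) (f : X -> X) : Prop :=
  forall eps (U V : X -> Prop), 0 < eps ->
    d_open d U -> (exists u, U u) -> d_open d V -> (exists v, V v) ->
    exists x y n, U x /\ V y /\ (1 <= n)%nat /\
      d (Nat.iter n f x) (Nat.iter n f y) < eps.

(* F^n(x) for F = {f1,f2}, as the (finite) list of all
   f_{i1} (f_{i2} ( ... f_{in} x)); F^0(x) = [x]. *)
Fixpoint Fiter {X : Type} (f1 f2 : X -> X) (n : nat) (x : X) : list X :=
  match n with
  | O => [x]
  | S m => map f1 (Fiter f1 f2 m x) ++ map f2 (Fiter f1 f2 m x)
  end.

Fixpoint lmax (l : list R) : R :=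
  match l with
  | [] => 0
  | [a] => a
  | a :: t => Rmax a (lmax t)
  end.
Fixpoint lmin (l : list R) : R :=
  match l with
  | [] => 0
  | [a] => a
  | a :: t => Rmin a (lmin t)
  end.

(* Hausdorff distance between nonempty finite sets given as lists:
   max { sup_{a in A} inf_{b in B} d a b , sup_{b in B} inf_{a in A} d a b } *)
Definition dH {X : Type} (d : X -> X -> R) (A B : list X) : R :=
  Rmax (lmax (map (fun a => lmin (map (d a) B)) A))
       (lmax (map (fun b => lmin (map (fun a => d a b) A)) B)).

Definition H_accessible {X : Type} (d : X -> X -> R) (f1 f2 : X -> X) : Prop :=
  forall eps (U V : X -> Prop), 0 < eps ->
    d_open d U -> (exists u, U u) -> d_open d V -> (exists v, V v) ->
    exists x y n, U x /\ V y /\ (1 <= n)%nat /\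
      dH d (Fiter f1 f2 n x) (Fiter f1 f2 n y) < eps.

(* Main.v *)
Require Import Defs.
From Stdlib Require Import Reals List Lra.
Open Scope R_scope.

Lemma lmax_le (l : list R) (M : R) :
  (forall r, In r l -> r <= M) -> 0 <= M -> lmax l <= M.
Proof.
  induction l as [|a t IH]; intros H HM; simpl; [lra|].
  destruct t as [|b t'].
  - apply H; simpl; auto.
  - apply Rmax_lub; [apply H; simpl; auto|].
    apply IH; [intros r Hr; apply H; simpl; auto| exact HM].
Qed.

Lemma lmin_le (l : list R) (r : R) : In r l -> lmin l <= r.
Proof.
  induction l as [|a t IH]; intros Hr; [destruct Hr|].
  simpl. destruct t as [|b t'].
  - destruct Hr as [<-|[]]; lra.
  - destruct Hr as [<-|Hr].
    + apply Rmin_l.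
    + eapply Rle_trans; [apply Rmin_r| apply IH; exact Hr].
Qed.

Section S.
Variables (X : Type) (f1 f2 : X -> X) (c : X).
Hypothesis Hf1 : forall x, f1 x = c.
Hypothesis Hc : f2 c = c.

Lemma Fiter_cases n x u : In u (Fiter f1 f2 n x) -> u = c \/ u = Nat.iter n f2 x.
Proof.
  revert u; induction n as [|m IH]; intros u Hu; simpl in *.
  - destruct Hu as [<-|[]]; auto.
  - apply in_app_or in Hu; destruct Hu as [Hu|Hu];
    apply in_map_iff in Hu; destruct Hu as [v [<- Hv]].
    + left; apply Hf1.
    + destruct (IH v Hv) as [->| ->]; auto.
Qed.

Lemma In_iter n x : In (Nat.iter n f2 x) (Fiter f1 f2 n x).
Proof.
  induction n as [|m IH]; simpl; auto.
  apply in_or_app; right; apply in_map; exact IH.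
Qed.

Lemma In_c n x : (1 <= n)%nat -> In c (Fiter f1 f2 n x).
Proof.
  destruct n as [|m]; intros H; [inversion H|]. simpl.
  apply in_or_app; left. rewrite <- (Hf1 (Nat.iter m f2 x)).
  apply in_map, In_iter.
Qed.
End S.

Theorem theorem3p8 (X : Type) (d : X -> X -> R) (f1 f2 : X -> X) (c : X) :
  is_metric d -> d_compact d ->
  d_continuous d f1 -> d_continuous d f2 ->
  (forall x, f1 x = c) -> f2 c = c -> accessible d f2 ->
  H_accessible d f1 f2.
Proof.
  intros Hm _ _ _ Hf1 Hc Hacc eps U V He HU HUn HV HVn.
  destruct (Hacc eps U V He HU HUn HV HVn) as [x [y [n [Ux [Vy [Hn Hd]]]]]].
  exists x, y, n. split; [exact Ux|]. split; [exact Vy|]. split; [exact Hn|].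
  set (a := Nat.iter n f2 x) in *. set (b := Nat.iter n f2 y) in *.
  assert (HM : 0 <= d a b) by apply (metric_nonneg d Hm).
  assert (Hcc : d c c = 0) by (apply (metric_eq0 d Hm); reflexivity).
  apply Rle_lt_trans with (d a b); [|exact Hd].
  unfold dH. apply Rmax_lub; apply lmax_le; auto; intros r Hr;
  apply in_map_iff in Hr; destruct Hr as [u [<- Hu]].
  - destruct (Fiter_cases X f1 f2 c Hf1 Hc n x u Hu) as [->| ->].
    + eapply Rle_trans; [apply lmin_le, in_map, (In_c X f1 f2 c Hf1 n y Hn)|]. lra.
    + apply lmin_le, in_map, In_iter.
  - destruct (Fiter_cases X f1 f2 c Hf1 Hc n y u Hu) as [->| ->].
    + eapply Rle_trans.
      * apply lmin_le. apply (in_map (fun a0 => d a0 c)), (In_c X f1 f2 c Hf1 n x Hn).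
      * simpl; lra.
    + apply lmin_le. apply (in_map (fun a0 => d a0 b)), In_iter.
Qed.
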